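(* Let $E\in\mathbb R$, $\eta>0$ and $n\ge0$. Then, in the sense of quadratic forms, $$\tilde\Gamma(0)\ \ge\ \sum_{x\in S_n}\ \sum_{y\in\mathcal N_x^+}G(0,x;E+i\eta)\,\tilde\Gamma(y)\,G(0,x;E+i\eta)^*.$$
   Context: Let $K\ge 2$ be an integer and let $\mathcal T$ be the rooted tree with root $0$ in which every vertex has exactly $K$ children. $x_-$ denotes the parent of $x$, $\mathcal N_x^+$ the set of children of $x$, and $S_n$ the set of vertices at distance $n$ from $0$. $H$ acts on $\ell^2(\mathcal T;\mathbb C^W)$ with blocks $I_W$ between adjacent vertices, Hermitian matrices $U(x)$ on the diagonal, and $0$ otherwise. $G(x,y;z)$ is the $(x,y)$ block of $(H-z)^{-1}$. For $y\ne0$, $\Gamma(y)=G^{\mathcal T_{y_-}}(y,y;E+i\eta)$, the $(y,y)$ block of the resolvent of the restriction of $H$ to the tree with $y_-$ deleted. Also $\Gamma(0)=G(0,0;E+i\eta)$, and $\tilde\Gamma(y)=(\Gamma(y)-\Gamma(y)^* )/(2i)$. *)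

(* Defs.v *)
From Stdlib Require Import Reals List.
Import ListNotations.
Open Scope R_scope.

Record C := mkC { Re : R; Im : R }.
Definition C0 : C := mkC 0 0.
Definition C1 : C := mkC 1 0.
Definition Cadd (a b : C) : C := mkC (Re a + Re b) (Im a + Im b).
Definition Copp (a : C) : C := mkC (- Re a) (- Im a).
Definition Cmul (a b : C) : C :=
  mkC (Re a * Re b - Im a * Im b) (Re a * Im b + Im a * Re b).
Definition Cconj (a : C) : C := mkC (Re a) (- Im a).
Definition Cnorm2 (a : C) : R := Re a * Re a + Im a * Im a.

Fixpoint Csum (n : nat) (f : nat -> C) : C :=
  match n with O => C0 | S m => Cadd (Csum m f) (f m) end.

(** * W x W complex matrices: entries with indices < W are meaningful *)
Definition Mat := nat -> nat -> C.
Definition mzero : Mat := fun _ _ => C0.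
Definition mid : Mat := fun i j => if Nat.eqb i j then C1 else C0.
Definition madd (A B : Mat) : Mat := fun i j => Cadd (A i j) (B i j).
Definition msub (A B : Mat) : Mat := fun i j => Cadd (A i j) (Copp (B i j)).
Definition mscale (a : C) (A : Mat) : Mat := fun i j => Cmul a (A i j).
Definition mmul (W : nat) (A B : Mat) : Mat :=
  fun i j => Csum W (fun k => Cmul (A i k) (B k j)).
Definition madj (A : Mat) : Mat := fun i j => Cconj (A j i).
Definition msum_list {T : Type} (l : list T) (f : T -> Mat) : Mat :=
  fold_right (fun t acc => madd (f t) acc) mzero l.
Definition meq (W : nat) (A B : Mat) : Prop :=
  forall i j, (i < W)%nat -> (j < W)%nat -> A i j = B i j.
Definition hermitian (W : nat) (A : Mat) : Prop :=
  forall i j, (i < W)%nat -> (j < W)%nat -> A i j = Cconj (A j i).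
Definition fnorm2 (W : nat) (A : Mat) : R :=
  Re (Csum W (fun i => Csum W (fun j => mkC (Cnorm2 (A i j)) 0))).
(** imaginary part  (A - A^* ) / (2 i) ;  1/(2i) = - i / 2 *)
Definition ImM (A : Mat) : Mat := mscale (mkC 0 (- / 2)) (msub A (madj A)).
Definition qform (W : nat) (A : Mat) (v : nat -> C) : C :=
  Csum W (fun i => Csum W (fun j => Cmul (Cmul (Cconj (v i)) (A i j)) (v j))).
Definition loewner_le (W : nat) (B A : Mat) : Prop :=
  forall v : nat -> C, Re (qform W B v) <= Re (qform W A v).

(** A vertex is a list of child indices (each < K), read from the vertex
   towards the root: the root 0 is [], the children of x are c :: x (c < K),
   and the parent of c :: x is x. *)
Definition vertex := list nat.
Definition valid (K : nat) (x : vertex) : Prop := Forall (fun c => (c < K)%nat) x.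
Definition children (K : nat) (x : vertex) : list vertex :=
  map (fun c => c :: x) (seq 0 K).
Fixpoint sphere (K n : nat) : list vertex :=
  match n with
  | O => [ [] ]
  | S m => flat_map (children K) (sphere K m)
  end.

(** For the operator H on l^2(T; C^W) with blocks I_W between adjacent vertices
   and U(x) on the diagonal, and Im z > 0, [is_root_resolvent K W U z G] says
   that x |-> G x is the row G(0, x; z) of (H - z)^{-1}: it is square summable
   and solves  sum_y G(0,y) (H - z)(y,x) = delta_{0 x} I_W  at every vertex x. *)
Definition parent_term (G : vertex -> Mat) (x : vertex) : Mat :=
  match x with [] => mzero | _ :: p => G p end.

Definition res_row_lhs (K W : nat) (U : vertex -> Mat) (z : C)
    (G : vertex -> Mat) (x : vertex) : Mat :=
  msub (madd (madd (mmul W (G x) (U x)) (parent_term G x))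
             (msum_list (children K x) G))
       (mscale z (G x)).

Definition is_root_resolvent (K W : nat) (U : vertex -> Mat) (z : C)
    (G : vertex -> Mat) : Prop :=
  (forall x, valid K x ->
     meq W (res_row_lhs K W U z G x)
           (match x with [] => mid | _ => mzero end))
  /\ exists M : R, forall n : nat,
       sum_f_R0 (fun m => fold_right (fun x acc => fnorm2 W (G x) + acc) 0
                                     (sphere K m)) n <= M.

(* Main.v *)
Require Import Defs.
From Stdlib Require Import Reals List Lra Lia Psatz.
Import Defs.
Import ListNotations.
Open Scope R_scope.

Lemma Ceq (a b : C) : Re a = Re b -> Im a = Im b -> a = b.
Proof. destruct a, b; simpl; intros; subst; reflexivity. Qed.

Definition Csub a b := Cadd a (Copp b).
Lemma Cring : ring_theory C0 C1 Cadd Cmul Csub Copp (@eq C).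
Proof. constructor; intros; apply Ceq; simpl; ring. Qed.
Add Ring Cring : Cring.

Lemma Cconj_add a b : Cconj (Cadd a b) = Cadd (Cconj a) (Cconj b).
Proof. apply Ceq; simpl; ring. Qed.
Lemma Cconj_mul a b : Cconj (Cmul a b) = Cmul (Cconj a) (Cconj b).
Proof. apply Ceq; simpl; ring. Qed.
Lemma Cconj_opp a : Cconj (Copp a) = Copp (Cconj a).
Proof. apply Ceq; simpl; ring. Qed.
Lemma Cconj_conj a : Cconj (Cconj a) = a.
Proof. apply Ceq; simpl; ring. Qed.
Lemma Cconj_0 : Cconj C0 = C0.
Proof. apply Ceq; simpl; ring. Qed.

Lemma Csum_ext n f g : (forall i, (i<n)%nat -> f i = g i) -> Csum n f = Csum n g.
Proof. induction n; simpl; intros H; auto. rewrite IHn, H; auto. Qed.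
Lemma Csum_add n f g : Csum n (fun i => Cadd (f i) (g i)) = Cadd (Csum n f) (Csum n g).
Proof. induction n; simpl. ring. rewrite IHn; ring. Qed.
Lemma Csum_mull n c f : Csum n (fun i => Cmul c (f i)) = Cmul c (Csum n f).
Proof. induction n; simpl. ring. rewrite IHn; ring. Qed.
Lemma Csum_mulr n c f : Csum n (fun i => Cmul (f i) c) = Cmul (Csum n f) c.
Proof. induction n; simpl. ring. rewrite IHn; ring. Qed.
Lemma Csum_opp n f : Csum n (fun i => Copp (f i)) = Copp (Csum n f).
Proof. induction n; simpl. ring. rewrite IHn; ring. Qed.
Lemma Csum_zero n : Csum n (fun _ => C0) = C0.
Proof. induction n; simpl. ring. rewrite IHn; ring. Qed.
Lemma Csum_swap n m f : Csum n (fun i => Csum m (fun j => f i j)) = Csum m (fun j => Csum n (fun i => f i j)).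
Proof. induction n; simpl. rewrite Csum_zero; auto. rewrite IHn, <- Csum_add. reflexivity. Qed.
Lemma Csum_conj n f : Cconj (Csum n f) = Csum n (fun i => Cconj (f i)).
Proof. induction n; simpl. apply Cconj_0. rewrite Cconj_add, IHn; auto. Qed.
Lemma Csum_delta n c l : Csum n (fun i => Cmul (c i) (mid i l)) = if Nat.ltb l n then c l else C0.
Proof.
  induction n; simpl. reflexivity. rewrite IHn. unfold mid.
  destruct (Nat.eqb_spec n l); destruct (Nat.ltb_spec l n); destruct (Nat.ltb_spec l (S n));
  subst; try lia; ring.
Qed.

Fixpoint Rsum (n:nat) (f:nat->R) : R := match n with O => 0 | S m => Rsum m f + f m end.
Lemma Re_Csum n f : Re (Csum n f) = Rsum n (fun i => Re (f i)).
Proof. induction n; simpl; auto. rewrite IHn; auto. Qed.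
Lemma Im_Csum n f : Im (Csum n f) = Rsum n (fun i => Im (f i)).
Proof. induction n; simpl; auto. rewrite IHn; auto. Qed.
Lemma Rsum_ext n f g : (forall i, (i<n)%nat -> f i = g i) -> Rsum n f = Rsum n g.
Proof. induction n; simpl; intros H; auto. rewrite IHn, H; auto. Qed.
Lemma Rsum_le n f g : (forall i, (i<n)%nat -> f i <= g i) -> Rsum n f <= Rsum n g.
Proof. induction n; simpl; intros H. lra. assert (f n <= g n) by auto. assert (Rsum n f <= Rsum n g) by auto. lra. Qed.
Lemma Rsum_add n f g : Rsum n (fun i => f i + g i) = Rsum n f + Rsum n g.
Proof. induction n; simpl. ring. rewrite IHn; ring. Qed.
Lemma Rsum_scal n c f : Rsum n (fun i => c * f i) = c * Rsum n f.
Proof. induction n; simpl. ring. rewrite IHn; ring. Qed.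
Lemma Rsum_zero n : Rsum n (fun _ => 0) = 0.
Proof. induction n; simpl. ring. rewrite IHn; ring. Qed.
Lemma Rsum_swap n m f : Rsum n (fun i => Rsum m (fun j => f i j)) = Rsum m (fun j => Rsum n (fun i => f i j)).
Proof. induction n; simpl. rewrite Rsum_zero; auto. rewrite IHn, <- Rsum_add. reflexivity. Qed.
Lemma Rsum_nonneg n f : (forall i, (i<n)%nat -> 0 <= f i) -> 0 <= Rsum n f.
Proof. intros H. rewrite <- (Rsum_zero n). apply Rsum_le; auto. Qed.
Lemma Rsum_term n f i : (forall i, (i<n)%nat -> 0 <= f i) -> (i < n)%nat -> f i <= Rsum n f.
Proof.
  induction n; simpl; intros H Hi. lia.
  assert (0 <= Rsum n f) by (apply Rsum_nonneg; auto).
  destruct (Nat.eq_dec i n). subst; lra. assert (f i <= Rsum n f) by (apply IHn; auto; lia).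
  assert (0 <= f n) by auto. lra.
Qed.

Definition lsum {T} (l : list T) (f : T -> C) : C := fold_right (fun t acc => Cadd (f t) acc) C0 l.
Definition rsum {T} (l : list T) (f : T -> R) : R := fold_right (fun t acc => f t + acc) 0 l.

Lemma rsum_ext {T} (l : list T) f g : (forall t, In t l -> f t = g t) -> rsum l f = rsum l g.
Proof. induction l; simpl; intros H; auto. rewrite IHl, H; auto. Qed.
Lemma rsum_le {T} (l : list T) f g : (forall t, In t l -> f t <= g t) -> rsum l f <= rsum l g.
Proof. induction l; simpl; intros H. lra. assert (f a <= g a) by auto. assert (rsum l f <= rsum l g) by auto. lra. Qed.
Lemma rsum_add {T} (l : list T) f g : rsum l (fun t => f t + g t) = rsum l f + rsum l g.
Proof. induction l; simpl. ring. rewrite IHl; ring. Qed.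
Lemma rsum_scal {T} (l : list T) c f : rsum l (fun t => c * f t) = c * rsum l f.
Proof. induction l; simpl. ring. rewrite IHl; ring. Qed.
Lemma rsum_opp {T} (l : list T) f : rsum l (fun t => - f t) = - rsum l f.
Proof. induction l; simpl. ring. rewrite IHl; ring. Qed.
Lemma rsum_app {T} (l1 l2 : list T) f : rsum (l1 ++ l2) f = rsum l1 f + rsum l2 f.
Proof. induction l1; simpl. ring. rewrite IHl1; ring. Qed.
Lemma rsum_flat_map {T U} (g : T -> list U) l f : rsum (flat_map g l) f = rsum l (fun t => rsum (g t) f).
Proof. induction l; simpl. auto. rewrite rsum_app, IHl; auto. Qed.
Lemma rsum_map {T U} (g : T -> U) l f : rsum (map g l) f = rsum l (fun t => f (g t)).
Proof. induction l; simpl; auto. rewrite IHl; auto. Qed.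
Lemma rsum_nonneg {T} (l : list T) f : (forall t, In t l -> 0 <= f t) -> 0 <= rsum l f.
Proof. induction l; simpl; intros H. lra. assert (0 <= f a) by auto. assert (0 <= rsum l f) by auto. lra. Qed.
Lemma rsum_In {T} (l : list T) f t : (forall t, In t l -> 0 <= f t) -> In t l -> f t <= rsum l f.
Proof.
  induction l; simpl; intros H Hi. contradiction.
  assert (0 <= f a) by auto. assert (0 <= rsum l f) by (apply rsum_nonneg; auto).
  destruct Hi. subst; lra. assert (f t <= rsum l f) by auto. lra.
Qed.
Lemma rsum_const {T} (l : list T) c : rsum l (fun _ => c) = INR (length l) * c.
Proof. induction l; simpl length. simpl; ring. rewrite S_INR. simpl. rewrite IHl. ring. Qed.
Lemma lsum_map {T U} (g : T -> U) l f : lsum (map g l) f = lsum l (fun t => f (g t)).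
Proof. induction l; simpl; auto. unfold lsum in *; simpl. rewrite IHl; auto. Qed.
Lemma Im_lsum {T} (l : list T) f : Im (lsum l f) = rsum l (fun t => Im (f t)).
Proof. induction l; simpl; auto. rewrite <- IHl. reflexivity. Qed.
Lemma Csum_lsum {T} n (l : list T) g : Csum n (fun k => lsum l (fun t => g t k)) = lsum l (fun t => Csum n (g t)).
Proof. induction l; simpl. apply Csum_zero. unfold lsum in *; simpl. rewrite Csum_add, IHl. reflexivity. Qed.
Lemma lsum_mull {T} (l : list T) c f : lsum l (fun t => Cmul c (f t)) = Cmul c (lsum l f).
Proof. induction l; simpl. unfold lsum; simpl; ring. unfold lsum in *; simpl. rewrite IHl; ring. Qed.

Definition ip (W:nat) (a b : nat -> C) : C := Csum W (fun k => Cmul (a k) (Cconj (b k))).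
Definition nrm (W:nat) (a : nat -> C) : R := Rsum W (fun k => Cnorm2 (a k)).
Definition rmul (W:nat) (a : nat -> C) (M : Mat) : nat -> C := fun k => Csum W (fun l => Cmul (a l) (M l k)).
Definition ptm (f : vertex -> nat -> C) (x : vertex) : nat -> C :=
  match x with [] => fun _ => C0 | _ :: p => f p end.
Definition Lop K W (U : vertex -> Mat) z (f : vertex -> nat -> C) x k :=
  Cadd (Cadd (Cadd (rmul W (f x) (U x) k) (ptm f x k)) (lsum (children K x) (fun c => f c k)))
       (Copp (Cmul z (f x k))).

Lemma msum_list_entry {T} (l : list T) G j k : msum_list l G j k = lsum l (fun c => G c j k).
Proof. induction l; simpl; auto. unfold lsum in *; simpl. rewrite <- IHl. reflexivity. Qed.

Lemma res_Lop K W U z G x j k : res_row_lhs K W U z G x j k = Lop K W U z (fun x l => G x j l) x k.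
Proof.
  unfold res_row_lhs, Lop, msub, madd, mscale, mmul, rmul.
  rewrite msum_list_entry. destruct x; reflexivity.
Qed.

Lemma ip_conj W a b : ip W b a = Cconj (ip W a b).
Proof. unfold ip. rewrite Csum_conj. apply Csum_ext; intros. rewrite Cconj_mul, Cconj_conj; ring. Qed.

Lemma Im_ip_anti W a b : Im (ip W b a) = - Im (ip W a b).
Proof. rewrite ip_conj. reflexivity. Qed.

Lemma ip_self W a : ip W a a = mkC (nrm W a) 0.
Proof. apply Ceq; unfold ip, nrm; simpl; rewrite ?Re_Csum, ?Im_Csum.
  apply Rsum_ext; intros; unfold Cnorm2; simpl; ring.
  rewrite <- (Rsum_zero W). apply Rsum_ext; intros; simpl; ring. Qed.

Lemma nrm_nonneg W a : 0 <= nrm W a.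
Proof. apply Rsum_nonneg; intros; unfold Cnorm2; nra. Qed.

Lemma Im_ip_herm W a U : hermitian W U -> Im (ip W (rmul W a U) a) = 0.
Proof.
  intros HU. set (q := ip W (rmul W a U) a).
  assert (Cconj q = q).
  { unfold q, ip, rmul. rewrite Csum_conj.
    transitivity (Csum W (fun k => Csum W (fun l => Cmul (Cmul (Cconj (a l)) (U k l)) (a k)))).
    - apply Csum_ext; intros k Hk. rewrite Cconj_mul, Cconj_conj, Csum_conj, <- Csum_mulr.
      apply Csum_ext; intros l Hl. rewrite Cconj_mul, (HU l k); auto. rewrite Cconj_conj. ring.
    - rewrite Csum_swap. apply Csum_ext; intros k Hk. rewrite <- Csum_mulr. apply Csum_ext; intros; ring. }
  destruct q as [qr qi]. unfold Cconj in H; simpl in *. injection H. intros. lra.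
Qed.

Lemma ip_add_l W a b c : ip W (fun k => Cadd (a k) (b k)) c = Cadd (ip W a c) (ip W b c).
Proof. unfold ip. rewrite <- Csum_add. apply Csum_ext; intros; ring. Qed.
Lemma ip_opp_l W a c : ip W (fun k => Copp (a k)) c = Copp (ip W a c).
Proof. unfold ip. rewrite <- Csum_opp. apply Csum_ext; intros; ring. Qed.
Lemma ip_scal_l W z a c : ip W (fun k => Cmul z (a k)) c = Cmul z (ip W a c).
Proof. unfold ip. rewrite <- Csum_mull. apply Csum_ext; intros; ring. Qed.
Lemma ip_lsum_l {T} W (l : list T) g c : ip W (fun k => lsum l (fun t => g t k)) c = lsum l (fun t => ip W (g t) c).
Proof. unfold ip. rewrite <- Csum_lsum. apply Csum_ext; intros.
  induction l; unfold lsum in *; simpl. ring. rewrite <- IHl. ring. Qed.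
Lemma ip_zero_l W c : ip W (fun _ => C0) c = C0.
Proof. unfold ip. transitivity (Csum W (fun _ => C0)). apply Csum_ext; intros; ring. apply Csum_zero. Qed.

Lemma ip_Lop K W U z f x b :
  ip W (Lop K W U z f x) b =
  Cadd (Cadd (Cadd (ip W (rmul W (f x) (U x)) b) (ip W (ptm f x) b))
             (lsum (children K x) (fun c => ip W (f c) b)))
       (Copp (Cmul z (ip W (f x) b))).
Proof.
  unfold Lop. rewrite !ip_add_l, ip_opp_l, ip_scal_l, (ip_lsum_l W (children K x) (fun c k => f c k)).
  reflexivity.
Qed.

Lemma ptm_nil_ip W f b : ip W (ptm f []) b = C0.
Proof. apply ip_zero_l. Qed.

Lemma children_valid K x c : valid K x -> In c (children K x) -> valid K c.
Proof. unfold children. intros Hx Hc. apply in_map_iff in Hc. destruct Hc as [c' [<- Hc']].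
  apply in_seq in Hc'. constructor; auto. lia. Qed.

Lemma sphere_valid K m x : In x (sphere K m) -> valid K x.
Proof. revert x; induction m; simpl; intros x Hx.
  destruct Hx as [<-|[]]. constructor.
  apply in_flat_map in Hx. destruct Hx as [p [Hp Hx]]. eapply children_valid; eauto. Qed.

Lemma sphere_S_cons K m x : In x (sphere K (S m)) -> exists c p, x = c :: p.
Proof. simpl. intros Hx. apply in_flat_map in Hx. destruct Hx as [p [_ Hx]].
  unfold children in Hx. apply in_map_iff in Hx. destruct Hx as [c [<- _]]. eauto. Qed.

Lemma Im_add a b : Im (Cadd a b) = Im a + Im b. Proof. reflexivity. Qed.
Lemma Im_opp a : Im (Copp a) = - Im a. Proof. reflexivity. Qed.

Lemma ward_vertex K W U z f s x :
  hermitian W (U x) ->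
  (forall k, (k < W)%nat -> Lop K W U z f x k = s x k) ->
  Im (ip W (s x) (f x)) = - Im z * nrm W (f x) + Im (ip W (ptm f x) (f x))
     + rsum (children K x) (fun c => Im (ip W (f c) (f x))).
Proof.
  intros HU HL.
  assert (E : ip W (s x) (f x) = ip W (Lop K W U z f x) (f x)).
  { unfold ip. apply Csum_ext; intros. rewrite HL; auto. }
  rewrite E, ip_Lop, !Im_add, Im_opp, Im_lsum, Im_ip_herm by auto.
  rewrite ip_self. simpl. ring.
Qed.

Definition bd K W f N := rsum (sphere K N) (fun x => rsum (children K x) (fun c => Im (ip W (f c) (f x)))).
Definition tn K W (f : vertex -> nat -> C) m := rsum (sphere K m) (fun x => nrm W (f x)).

Lemma e_S K W f m : rsum (sphere K (S m)) (fun x => Im (ip W (ptm f x) (f x))) = - bd K W f m.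
Proof.
  unfold bd. simpl sphere. rewrite rsum_flat_map, <- rsum_opp. apply rsum_ext; intros p _.
  unfold children. rewrite !rsum_map, <- rsum_opp. apply rsum_ext; intros c _. simpl ptm.
  apply Im_ip_anti.
Qed.

Lemma ward K W U z f s
  (hU : forall x, valid K x -> hermitian W (U x))
  (hL : forall x, valid K x -> forall k, (k < W)%nat -> Lop K W U z f x k = s x k) N :
  sum_f_R0 (fun m => rsum (sphere K m) (fun x => Im (ip W (s x) (f x)))) N
  = - Im z * sum_f_R0 (tn K W f) N + bd K W f N.
Proof.
  assert (Hm : forall m, rsum (sphere K m) (fun x => Im (ip W (s x) (f x))) =
     - Im z * tn K W f m + rsum (sphere K m) (fun x => Im (ip W (ptm f x) (f x))) + bd K W f m).
  { intros m. unfold tn, bd. rewrite <- rsum_scal, <- !rsum_add. apply rsum_ext; intros x Hx.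
    apply sphere_valid in Hx. apply (ward_vertex K W U); auto. }
  induction N.
  - specialize (Hm 0%nat). simpl sphere in Hm. unfold rsum in Hm at 2. simpl in Hm.
    unfold ip in Hm at 2. rewrite Im_Csum in Hm. simpl in Hm. rewrite (Rsum_ext W _ (fun _ => 0)) in Hm.
    rewrite Rsum_zero in Hm. simpl. lra. intros; simpl; ring.
  - rewrite !tech5, IHN, Hm, e_S. ring.
Qed.

Lemma Im_ip_le W u v : Im (ip W u v) <= (nrm W u + nrm W v) / 2.
Proof.
  unfold ip, nrm. rewrite Im_Csum.
  replace ((Rsum W (fun k => Cnorm2 (u k)) + Rsum W (fun k => Cnorm2 (v k))) / 2)
    with (Rsum W (fun k => (Cnorm2 (u k) + Cnorm2 (v k)) / 2)).
  apply Rsum_le; intros. unfold Cnorm2; simpl.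
  destruct (u i) as [a b], (v i) as [c d]; simpl. assert (0 <= (a+d)*(a+d) + (b-c)*(b-c)) by (apply Rplus_le_le_0_compat; apply Rle_0_sqr). lra.
  unfold Rdiv. rewrite (Rsum_ext W _ (fun k => / 2 * (Cnorm2 (u k) + Cnorm2 (v k)))).
  rewrite Rsum_scal, Rsum_add. ring. intros; ring.
Qed.

Lemma tn_nonneg K W f m : 0 <= tn K W f m.
Proof. apply rsum_nonneg; intros; apply nrm_nonneg. Qed.

Lemma children_length K x : length (children K x) = K.
Proof. unfold children. rewrite length_map, length_seq. auto. Qed.

Lemma bd_le K W f N : bd K W f N <= (tn K W f (S N) + INR K * tn K W f N) / 2.
Proof.
  unfold bd, tn. simpl sphere at 2. rewrite rsum_flat_map.
  apply Rle_trans with (rsum (sphere K N) (fun x => rsum (children K x) (fun c => (nrm W (f c) + nrm W (f x)) / 2))).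
  apply rsum_le; intros; apply rsum_le; intros; apply Im_ip_le.
  apply Req_le.
  transitivity (rsum (sphere K N) (fun x => / 2 * rsum (children K x) (fun c => nrm W (f c)) + / 2 * INR K * nrm W (f x))).
  apply rsum_ext; intros.
  rewrite (rsum_ext _ _ (fun c => / 2 * nrm W (f c) + / 2 * nrm W (f t))) by (intros; unfold Rdiv; ring).
  rewrite rsum_add, rsum_scal, rsum_const, children_length. ring.
  rewrite rsum_add, rsum_scal, rsum_scal. unfold Rdiv. ring.
Qed.

Lemma sum_ge_first t N : (forall m, 0 <= t m) -> t 0%nat <= sum_f_R0 t N.
Proof. intros H; induction N; simpl. lra. specialize (H (S N)). lra. Qed.

Lemma sum_shift_le t L : (forall m, 0 <= t m) -> sum_f_R0 (fun N => t (S N)) L <= sum_f_R0 t (S L).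
Proof. intros H. rewrite (decomp_sum t (S L)) by lia. simpl pred. specialize (H 0%nat). lra. Qed.

Lemma uniq K W U z f
  (hU : forall x, valid K x -> hermitian W (U x)) (heta : 0 < Im z)
  (hL : forall x, valid K x -> forall k, (k < W)%nat -> Lop K W U z f x k = C0)
  M (hM : forall N, sum_f_R0 (tn K W f) N <= M) :
  forall k, (k < W)%nat -> f [] k = C0.
Proof.
  assert (HW : forall N, Im z * sum_f_R0 (tn K W f) N = bd K W f N).
  { intros N. pose proof (ward K W U z f (fun _ _ => C0) hU hL N) as Hw.
    rewrite (sum_eq _ (fun _ => 0)) in Hw. rewrite sum_cte in Hw. lra.
    intros m _. transitivity (rsum (sphere K m) (fun _ : vertex => 0)).
    apply rsum_ext; intros. rewrite ip_zero_l. reflexivity.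
    rewrite rsum_const. ring. }
  assert (Hp : forall m, 0 <= tn K W f m) by (intros; apply tn_nonneg).
  assert (H1 : forall N, Im z * tn K W f 0 <= (tn K W f (S N) + INR K * tn K W f N) / 2).
  { intros N. apply Rle_trans with (Im z * sum_f_R0 (tn K W f) N).
    apply Rmult_le_compat_l; [lra | apply sum_ge_first; auto]. rewrite HW. apply bd_le. }
  assert (H2 : forall L, Im z * tn K W f 0 * INR (S L) <= (M + INR K * M) / 2).
  { intros L. rewrite <- sum_cte.
    apply Rle_trans with (sum_f_R0 (fun N => (tn K W f (S N) + INR K * tn K W f N) / 2) L).
    apply sum_Rle; intros; auto.
    assert (E : forall L, sum_f_R0 (fun N => (tn K W f (S N) + INR K * tn K W f N) / 2) L
       = (sum_f_R0 (fun N => tn K W f (S N)) L + INR K * sum_f_R0 (tn K W f) L) / 2).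
    { induction L0; simpl. reflexivity. rewrite IHL0. field. }
    rewrite E.
    assert (sum_f_R0 (fun N => tn K W f (S N)) L <= M).
    { eapply Rle_trans. apply sum_shift_le; auto. auto. }
    assert (INR K * sum_f_R0 (tn K W f) L <= INR K * M).
    { apply Rmult_le_compat_l. apply pos_INR. auto. }
    lra. }
  assert (H0 : tn K W f 0 = 0).
  { destruct (Rle_lt_dec (tn K W f 0) 0) as [Hle|Hlt]. specialize (Hp 0%nat). lra.
    destruct (INR_archimed (Im z * tn K W f 0) ((M + INR K * M) / 2)) as [n Hn].
    apply Rmult_lt_0_compat; lra.
    specialize (H2 n). rewrite S_INR in H2. nra. }
  unfold tn in H0. simpl in H0. rewrite Rplus_0_r in H0.
  intros k Hk.
  assert (Hc : Cnorm2 (f [] k) <= 0).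
  { rewrite <- H0. unfold nrm. apply (Rsum_term W (fun k => Cnorm2 (f [] k))); auto.
    intros; unfold Cnorm2; nra. }
  unfold Cnorm2 in Hc. destruct (f [] k) as [a b]. simpl in Hc. apply Ceq; simpl; nra.
Qed.

Lemma Lop_add K W U z f g x k :
  Lop K W U z (fun x l => Cadd (f x l) (g x l)) x k = Cadd (Lop K W U z f x k) (Lop K W U z g x k).
Proof.
  unfold Lop, rmul.
  assert (E1 : Csum W (fun l => Cmul (Cadd (f x l) (g x l)) (U x l k)) =
     Cadd (Csum W (fun l => Cmul (f x l) (U x l k))) (Csum W (fun l => Cmul (g x l) (U x l k)))).
  { rewrite <- Csum_add. apply Csum_ext; intros; ring. }
  assert (E2 : ptm (fun x l => Cadd (f x l) (g x l)) x k = Cadd (ptm f x k) (ptm g x k)).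
  { destruct x; simpl; auto. ring. }
  assert (E3 : forall l : list vertex, lsum l (fun c => Cadd (f c k) (g c k)) = Cadd (lsum l (fun c => f c k)) (lsum l (fun c => g c k))).
  { induction l; unfold lsum in *; simpl. ring. rewrite IHl. ring. }
  rewrite E1, E2, E3. ring.
Qed.

Lemma Lop_lin K W U z n c b x k :
  Lop K W U z (fun x l => Csum n (fun i => Cmul (c i) (b i x l))) x k =
  Csum n (fun i => Cmul (c i) (Lop K W U z (b i) x k)).
Proof.
  unfold Lop.
  assert (E1 : rmul W (fun l => Csum n (fun i => Cmul (c i) (b i x l))) (U x) k =
               Csum n (fun i => Cmul (c i) (rmul W (b i x) (U x) k))).
  { unfold rmul. rewrite (Csum_ext n _ (fun i => Csum W (fun l => Cmul (c i) (Cmul (b i x l) (U x l k))))).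
    rewrite Csum_swap. apply Csum_ext; intros. rewrite <- Csum_mulr. apply Csum_ext; intros; ring.
    intros. rewrite <- Csum_mull. reflexivity. }
  assert (E2 : ptm (fun x l => Csum n (fun i => Cmul (c i) (b i x l))) x k =
               Csum n (fun i => Cmul (c i) (ptm (b i) x k))).
  { destruct x; simpl; auto. transitivity (Csum n (fun _ => C0)). symmetry; apply Csum_zero.
    apply Csum_ext; intros; ring. }
  assert (E3 : lsum (children K x) (fun c0 => Csum n (fun i => Cmul (c i) (b i c0 k))) =
               Csum n (fun i => Cmul (c i) (lsum (children K x) (fun c0 => b i c0 k)))).
  { rewrite (Csum_ext n _ (fun i => lsum (children K x) (fun c0 => Cmul (c i) (b i c0 k)))).
    rewrite (Csum_lsum n (children K x) (fun c0 i => Cmul (c i) (b i c0 k))). reflexivity.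
    intros. rewrite lsum_mull. reflexivity. }
  rewrite E1, E2, E3. rewrite <- Csum_mull, <- Csum_opp, <- !Csum_add. apply Csum_ext; intros; ring.
Qed.


Lemma lsum_children_shift K (w y : vertex) (g : vertex -> C) :
  lsum (children K w) (fun c => g (c ++ y)) = lsum (children K (w ++ y)) g.
Proof. unfold children. rewrite !lsum_map. reflexivity. Qed.

Lemma Lop_shift_cons K W U z f y c w k :
  Lop K W (fun w => U (w ++ y)) z (fun w => f (w ++ y)) (c :: w) k = Lop K W U z f ((c :: w) ++ y) k.
Proof.
  unfold Lop. rewrite (lsum_children_shift K (c :: w) y (fun c0 => f c0 k)). reflexivity.
Qed.

Lemma Lop_shift_nil K W U z f y k :
  Lop K W (fun w => U (w ++ y)) z (fun w => f (w ++ y)) [] k = Cadd (Lop K W U z f y k) (Copp (ptm f y k)).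
Proof.
  unfold Lop. rewrite (lsum_children_shift K [] y (fun c0 => f c0 k)). simpl. ring.
Qed.

Lemma Cnorm2_nonneg a : 0 <= Cnorm2 a.
Proof. unfold Cnorm2; nra. Qed.
Lemma Cnorm2_add a b : Cnorm2 (Cadd a b) <= 2 * Cnorm2 a + 2 * Cnorm2 b.
Proof. destruct a as [p q], b as [r s]; unfold Cnorm2; simpl.
  assert (0 <= (p-r)*(p-r) + (q-s)*(q-s)) by (apply Rplus_le_le_0_compat; apply Rle_0_sqr). lra. Qed.
Lemma Cnorm2_mul a b : Cnorm2 (Cmul a b) = Cnorm2 a * Cnorm2 b.
Proof. destruct a, b; unfold Cnorm2; simpl; ring. Qed.
Lemma Cnorm2_Csum n f : Cnorm2 (Csum n f) <= 2 ^ n * Rsum n (fun i => Cnorm2 (f i)).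
Proof.
  induction n; simpl. unfold Cnorm2; simpl; lra.
  eapply Rle_trans. apply Cnorm2_add.
  assert (1 <= 2 ^ n) by (apply pow_R1_Rle; lra).
  assert (0 <= Cnorm2 (f n)) by apply Cnorm2_nonneg.
  assert (0 <= Rsum n (fun i => Cnorm2 (f i))) by (apply Rsum_nonneg; intros; apply Cnorm2_nonneg).
  nra.
Qed.

Lemma fnorm2_eq W A : fnorm2 W A = Rsum W (fun i => Rsum W (fun j => Cnorm2 (A i j))).
Proof. unfold fnorm2. rewrite Re_Csum. apply Rsum_ext; intros. rewrite Re_Csum. reflexivity. Qed.

Lemma fnorm2_nonneg W A : 0 <= fnorm2 W A.
Proof. rewrite fnorm2_eq. apply Rsum_nonneg; intros; apply Rsum_nonneg; intros; apply Cnorm2_nonneg. Qed.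

Lemma row_le W A i : (i < W)%nat -> nrm W (fun l => A i l) <= fnorm2 W A.
Proof. intros Hi. rewrite fnorm2_eq. unfold nrm.
  apply (Rsum_term W (fun i => Rsum W (fun j => Cnorm2 (A i j)))); auto.
  intros; apply Rsum_nonneg; intros; apply Cnorm2_nonneg. Qed.

Lemma entry_le W A i j : (i < W)%nat -> (j < W)%nat -> Cnorm2 (A i j) <= fnorm2 W A.
Proof. intros Hi Hj. eapply Rle_trans; [|apply (row_le W A i Hi)]. unfold nrm.
  apply (Rsum_term W (fun l => Cnorm2 (A i l))); auto. intros; apply Cnorm2_nonneg. Qed.

Lemma nrm_add_le W a b : nrm W (fun l => Cadd (a l) (b l)) <= 2 * nrm W a + 2 * nrm W b.
Proof. unfold nrm. rewrite <- !Rsum_scal, <- Rsum_add. apply Rsum_le; intros; apply Cnorm2_add. Qed.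



Lemma nrm_prod_le W c B F : (forall j, (j < W)%nat -> Cnorm2 (c j) <= F) ->
  nrm W (fun l => Csum W (fun j => Cmul (c j) (B j l))) <= 2 ^ W * F * fnorm2 W B.
Proof.
  intros Hc. unfold nrm. rewrite fnorm2_eq, Rsum_swap.
  rewrite Rmult_assoc, <- Rsum_scal, <- Rsum_scal. apply Rsum_le; intros l Hl.
  eapply Rle_trans. apply Cnorm2_Csum. apply Rmult_le_compat_l. apply pow_le; lra.
  rewrite <- Rsum_scal. apply Rsum_le; intros j Hj. rewrite Cnorm2_mul.
  apply Rmult_le_compat_r. apply Cnorm2_nonneg. auto.
Qed.

Lemma sphere_decomp K L m (g : vertex -> R) :
  rsum (sphere K (m + L)) g = rsum (sphere K L) (fun y => rsum (sphere K m) (fun w => g (w ++ y))).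
Proof.
  revert g; induction m; intros g.
  - simpl. apply rsum_ext; intros. ring.
  - simpl (S m + L)%nat. simpl sphere at 1. rewrite rsum_flat_map, IHm. apply rsum_ext; intros y _.
    simpl sphere. rewrite rsum_flat_map. apply rsum_ext; intros w _.
    unfold children. rewrite !rsum_map. reflexivity.
Qed.

Lemma sphere_sub K L m y (g : vertex -> R) : (forall t, 0 <= g t) -> In y (sphere K L) ->
  rsum (sphere K m) (fun w => g (w ++ y)) <= rsum (sphere K (m + L)) g.
Proof.
  intros Hg Hy. rewrite sphere_decomp.
  apply (rsum_In (sphere K L) (fun y => rsum (sphere K m) (fun w => g (w ++ y)))); auto.
  intros; apply rsum_nonneg; auto.
Qed.

Lemma sum_term_le t N : (forall m, 0 <= t m) -> t N <= sum_f_R0 t N.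
Proof. intros H; destruct N; simpl. lra. assert (0 <= sum_f_R0 t N) by (apply cond_pos_sum; auto). lra. Qed.

Lemma sum_shiftL_le t L N : (forall m, 0 <= t m) -> sum_f_R0 (fun m => t (m + L)%nat) N <= sum_f_R0 t (N + L).
Proof.
  intros H; induction N; simpl. apply sum_term_le; auto.
  specialize (H (S (N + L))). lra.
Qed.

Lemma valid_in_sphere K x : valid K x -> In x (sphere K (length x)).
Proof.
  induction 1; simpl. auto. apply in_flat_map. exists l; split; auto.
  unfold children. apply in_map_iff. exists x; split; auto. apply in_seq. lia.
Qed.

Lemma sum_lin a b p q N : sum_f_R0 (fun m => a * p m + b * q m) N = a * sum_f_R0 p N + b * sum_f_R0 q N.
Proof. induction N; simpl. ring. rewrite IHN. ring. Qed.

Lemma split_lemma K W U z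
  (hU : forall x, valid K x -> hermitian W (U x)) (heta : 0 < Im z)
  (G0 : vertex -> Mat) (hG0 : is_root_resolvent K W U z G0)
  (Gam : vertex -> vertex -> Mat)
  (hGam : forall y, valid K y -> y <> [] -> is_root_resolvent K W (fun w => U (w ++ y)) z (Gam y))
  x c (Hx : valid K x) (Hc : (c < K)%nat) i l (Hi : (i < W)%nat) (Hl : (l < W)%nat) :
  G0 (c :: x) i l = Copp (Csum W (fun j => Cmul (G0 x i j) (Gam (c :: x) [] j l))).
Proof.
  set (y := c :: x).
  assert (Hy : valid K y) by (constructor; auto).
  assert (Hne : y <> []) by discriminate.
  destruct (hGam y Hy Hne) as [HGe [M1 HM1]].
  destruct hG0 as [HG0e [M0 HM0]].
  pose (F1 := fun w l => Csum W (fun j => Cmul (G0 x i j) (Gam y w j l))).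
  pose (F2 := fun w => (fun x l => G0 x i l) (w ++ y)).
  pose (d := fun w l => Cadd (F1 w l) (F2 w l)).
  assert (HL : forall w, valid K w -> forall k, (k < W)%nat -> Lop K W (fun w => U (w ++ y)) z d w k = C0).
  { intros w Hw k Hk. unfold d. rewrite Lop_add. unfold F1.
    rewrite (Lop_lin K W (fun w => U (w ++ y)) z W (fun j => G0 x i j) (fun j w l => Gam y w j l)).
    rewrite (Csum_ext W _ (fun j => Cmul (G0 x i j) ((match w with [] => mid | _ => mzero end) j k))).
    2:{ intros j Hj. rewrite <- res_Lop. rewrite (HGe w Hw j k); auto. }
    destruct w as [|c' w'].
    - rewrite Csum_delta. destruct (Nat.ltb_spec k W); [|lia].
      unfold F2. rewrite (Lop_shift_nil K W U z (fun x l => G0 x i l) y k : Lop K W (fun w => U (w ++ y)) z (fun (w : list nat) (l : nat) => G0 (w ++ y) i l) [] k = _). rewrite <- res_Lop.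
      rewrite (HG0e y (Hy) i k Hi Hk). unfold mzero. apply Ceq; simpl; ring.
    - unfold F2. rewrite (Lop_shift_cons K W U z (fun x l => G0 x i l) y c' w' k : Lop K W (fun w => U (w ++ y)) z (fun (w : list nat) (l : nat) => G0 (w ++ y) i l) _ k = _). rewrite <- res_Lop.
      assert (Hv : valid K ((c' :: w') ++ y)) by (apply Forall_app; auto).
      rewrite (HG0e _ Hv i k Hi Hk). simpl.
      transitivity (Cadd (Csum W (fun _ => C0)) C0). f_equal. apply Csum_ext; intros; unfold mzero; ring.
      rewrite Csum_zero. ring. }
  assert (HUy : forall w, valid K w -> hermitian W (U (w ++ y))).
  { intros w Hw. apply hU. apply Forall_app; auto. }
  set (F := fnorm2 W (G0 x)).
  assert (HF : forall j, (j < W)%nat -> Cnorm2 (G0 x i j) <= F) by (intros; apply entry_le; auto).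
  assert (Hyin : In y (sphere K (S (length x)))).
  { simpl. apply in_flat_map. exists x; split. apply valid_in_sphere; auto.
    unfold children. apply in_map_iff. exists c; split; auto. apply in_seq. lia. }
  assert (HM : forall N, sum_f_R0 (tn K W d) N <= 2 * (2 ^ W * F) * M1 + 2 * M0).
  { intros N.
    apply Rle_trans with (sum_f_R0 (fun m => 2 * (2 ^ W * F) * rsum (sphere K m) (fun w => fnorm2 W (Gam y w))
        + 2 * rsum (sphere K (m + S (length x))) (fun w => fnorm2 W (G0 w))) N).
    - apply sum_Rle; intros m _. unfold tn.
      apply Rle_trans with (rsum (sphere K m) (fun w => 2 * (2 ^ W * F) * fnorm2 W (Gam y w) + 2 * fnorm2 W (G0 (w ++ y)))).
      + apply rsum_le; intros w _. unfold d. eapply Rle_trans. apply nrm_add_le.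
        assert (nrm W (F1 w) <= 2 ^ W * F * fnorm2 W (Gam y w)) by (apply nrm_prod_le; auto).
        assert (nrm W (F2 w) <= fnorm2 W (G0 (w ++ y))) by (apply (row_le W (G0 (w ++ y)) i Hi)).
        lra.
      + rewrite rsum_add, !rsum_scal. apply Rplus_le_compat_l. apply Rmult_le_compat_l. lra.
        apply (sphere_sub K (S (length x)) m y (fun w => fnorm2 W (G0 w))); auto. intros; apply fnorm2_nonneg.
    - rewrite sum_lin. apply Rplus_le_compat.
      + apply Rmult_le_compat_l. assert (0 <= F) by apply fnorm2_nonneg.
        assert (0 <= 2 ^ W) by (apply pow_le; lra). nra. apply HM1.
      + apply Rmult_le_compat_l. lra. eapply Rle_trans. apply (sum_shiftL_le (fun m => rsum (sphere K m) (fun w => fnorm2 W (G0 w)))).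
        intros; apply rsum_nonneg; intros; apply fnorm2_nonneg. apply HM0. }
  pose proof (uniq K W (fun w => U (w ++ y)) z d HUy heta HL _ HM l Hl) as H0.
  unfold d, F1, F2 in H0. simpl in H0.
  set (S0 := Csum W (fun j : nat => Cmul (G0 x i j) (Gam y [] j l))) in *.
  assert (E : G0 y i l = Cadd (Cadd S0 (G0 y i l)) (Copp S0)) by (apply Ceq; simpl; ring).
  rewrite E, H0. apply Ceq; simpl; ring.
Qed.

Lemma ip_ext1 W a a' b : (forall k, (k < W)%nat -> a k = a' k) -> ip W a b = ip W a' b.
Proof. intros H; unfold ip; apply Csum_ext; intros; rewrite H; auto. Qed.
Lemma ip_ext2 W a b b' : (forall k, (k < W)%nat -> b k = b' k) -> ip W a b = ip W a b'.
Proof. intros H; unfold ip; apply Csum_ext; intros; rewrite H; auto. Qed.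

Lemma qform_ip W B v : qform W B v = ip W (rmul W (fun i => Cconj (v i)) B) (fun i => Cconj (v i)).
Proof.
  unfold qform, ip, rmul. rewrite Csum_swap. apply Csum_ext; intros j Hj.
  rewrite Cconj_conj, <- Csum_mulr. apply Csum_ext; intros; reflexivity.
Qed.

Lemma rmul_mmul W r A B k : rmul W r (mmul W A B) k = rmul W (rmul W r A) B k.
Proof.
  unfold rmul, mmul.
  rewrite (Csum_ext W _ (fun i => Csum W (fun p => Cmul (r i) (Cmul (A i p) (B p k))))).
  rewrite Csum_swap. apply Csum_ext; intros. rewrite <- Csum_mulr. apply Csum_ext; intros.
  apply Ceq; simpl; ring.
  intros. rewrite Csum_mull. reflexivity.
Qed.

Lemma ip_adj W b c A : ip W (rmul W b (madj A)) c = ip W b (rmul W c A).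
Proof.
  unfold ip, rmul, madj.
  rewrite (Csum_ext W _ (fun k => Csum W (fun j => Cmul (b j) (Cmul (Cconj (A k j)) (Cconj (c k)))))).
  rewrite Csum_swap. apply Csum_ext; intros j Hj. rewrite Csum_conj, <- Csum_mull.
  apply Csum_ext; intros. rewrite Cconj_mul. apply Ceq; simpl; ring.
  intros. rewrite <- Csum_mulr. apply Csum_ext; intros. apply Ceq; simpl; ring.
Qed.

Lemma Re_ip_ImM W a M : Re (ip W (rmul W a (ImM M)) a) = Im (ip W (rmul W a M) a).
Proof.
  assert (E : ip W (rmul W a (ImM M)) a =
     Cmul (mkC 0 (- / 2)) (Cadd (ip W (rmul W a M) a) (Copp (ip W (rmul W a (madj M)) a)))).
  { rewrite (ip_ext1 W _ (fun k => Cmul (mkC 0 (- / 2)) (Cadd (rmul W a M k) (Copp (rmul W a (madj M) k))))).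
    rewrite ip_scal_l, ip_add_l, ip_opp_l. reflexivity.
    intros k _. unfold ImM, mscale, msub, rmul. rewrite <- Csum_opp, <- Csum_add, <- Csum_mull.
    apply Csum_ext; intros. apply Ceq; simpl; ring. }
  rewrite E, ip_adj, ip_conj. destruct (ip W (rmul W a M) a) as [p q]. simpl. field.
Qed.

Lemma qform_add W A B v : qform W (madd A B) v = Cadd (qform W A v) (qform W B v).
Proof. unfold qform, madd. rewrite <- Csum_add. apply Csum_ext; intros. rewrite <- Csum_add.
  apply Csum_ext; intros. apply Ceq; simpl; ring. Qed.
Lemma qform_zero W v : qform W mzero v = C0.
Proof. unfold qform, mzero. transitivity (Csum W (fun _ => C0)). apply Csum_ext; intros.
  transitivity (Csum W (fun _ => C0)). apply Csum_ext; intros. apply Ceq; simpl; ring.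
  apply Csum_zero. apply Csum_zero. Qed.
Lemma Re_qform_msum {T} W (l : list T) F v : Re (qform W (msum_list l F) v) = rsum l (fun t => Re (qform W (F t) v)).
Proof. induction l; simpl. rewrite qform_zero; reflexivity. rewrite qform_add. simpl. rewrite IHl. reflexivity. Qed.

Theorem lemmal (K W : nat) (hK : (2 <= K)%nat)
  (U : vertex -> Mat) (hU : forall x, valid K x -> hermitian W (U x))
  (E eta : R) (heta : 0 < eta) (n : nat)
  (G0 : vertex -> Mat)
  (hG0 : is_root_resolvent K W U (mkC E eta) G0)
  (Gam : vertex -> vertex -> Mat)
  (hGam : forall y, valid K y -> y <> [] ->
     is_root_resolvent K W (fun w => U (w ++ y)) (mkC E eta) (Gam y)) :
  loewner_le W
    (msum_list (sphere K n) (fun x =>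
       msum_list (children K x) (fun y =>
         mmul W (mmul W (G0 x) (ImM (Gam y []))) (madj (G0 x)))))
    (ImM (G0 [])).
Proof.
  intros v.
  set (z := mkC E eta) in *.
  assert (hz : 0 < Im z) by (simpl; lra).
  set (r := fun i => Cconj (v i)).
  set (a := fun x => rmul W r (G0 x)).
  set (s := fun (x : vertex) (k : nat) => match x with [] => Cconj (v k) | _ => C0 end).
  assert (HLa : forall x, valid K x -> forall k, (k < W)%nat -> Lop K W U z a x k = s x k).
  { intros x Hx k Hk. unfold a, rmul.
    rewrite (Lop_lin K W U z W r (fun i x l => G0 x i l)).
    rewrite (Csum_ext W _ (fun i => Cmul (r i) ((match x with [] => mid | _ => mzero end) i k))).
    2:{ intros i Hi. rewrite <- res_Lop. destruct hG0 as [HG _]. rewrite (HG x Hx i k); auto. }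
    destruct x as [|c x'].
    - rewrite Csum_delta. destruct (Nat.ltb_spec k W); [|lia]. reflexivity.
    - simpl. transitivity (Csum W (fun _ => C0)). apply Csum_ext; intros; unfold mzero; apply Ceq; simpl; ring.
      apply Csum_zero. }
  assert (Hl : sum_f_R0 (fun m => rsum (sphere K m) (fun x => Im (ip W (s x) (a x)))) n = Im (ip W r (a []))).
  { clear hGam. induction n.
    - simpl. rewrite Rplus_0_r. reflexivity.
    - rewrite tech5, IHn. rewrite (rsum_ext _ _ (fun _ => 0)). rewrite rsum_const. ring.
      intros x Hx. destruct (sphere_S_cons K n x Hx) as [c [p ->]]. simpl.
      rewrite ip_zero_l. reflexivity. }
  pose proof (ward K W U z a s hU HLa n) as Hw.
  rewrite Hl in Hw. clear Hl.
  assert (HR : Re (qform W (ImM (G0 [])) v) = - Im (ip W r (a []))).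
  { rewrite qform_ip. fold r. rewrite Re_ip_ImM. fold (a []). rewrite Im_ip_anti. ring. }
  assert (HLt : Re (qform W (msum_list (sphere K n) (fun x => msum_list (children K x) (fun y =>
         mmul W (mmul W (G0 x) (ImM (Gam y []))) (madj (G0 x))))) v) = - bd K W a n).
  { rewrite Re_qform_msum. unfold bd. rewrite <- rsum_opp. apply rsum_ext; intros x Hx.
    rewrite Re_qform_msum. rewrite <- rsum_opp. apply rsum_ext; intros y Hy.
    assert (Hxv : valid K x) by (eapply sphere_valid; eauto).
    unfold children in Hy. apply in_map_iff in Hy. destruct Hy as [c [<- Hc]]. apply in_seq in Hc.
    rewrite qform_ip. fold r.
    rewrite (ip_ext1 W _ (rmul W (rmul W r (mmul W (G0 x) (ImM (Gam (c :: x) [])))) (madj (G0 x))))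
      by (intros; apply rmul_mmul).
    rewrite ip_adj.
    rewrite (ip_ext1 W _ (rmul W (rmul W r (G0 x)) (ImM (Gam (c :: x) [])))) by (intros; apply rmul_mmul).
    fold (a x). rewrite Re_ip_ImM.
    rewrite (ip_ext1 W _ (fun l => Copp (a (c :: x) l))).
    rewrite ip_opp_l. reflexivity.
    intros l Hl. unfold a, rmul.
    rewrite (Csum_ext W (fun i => Cmul (r i) (G0 (c :: x) i l))
       (fun i => Cmul (r i) (Copp (Csum W (fun j => Cmul (G0 x i j) (Gam (c :: x) [] j l)))))).
    2:{ intros i Hi. rewrite (split_lemma K W U z hU hz G0 hG0 Gam hGam x c Hxv); auto; lia. }
    rewrite <- Csum_opp.
    rewrite (Csum_ext W (fun i => Copp (Cmul (r i) (Copp (Csum W (fun j => Cmul (G0 x i j) (Gam (c :: x) [] j l))))))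
       (fun i => Csum W (fun j => Cmul (r i) (Cmul (G0 x i j) (Gam (c :: x) [] j l))))).
    rewrite Csum_swap. apply Csum_ext; intros. rewrite <- Csum_mulr. apply Csum_ext; intros.
    apply Ceq; simpl; ring.
    intros. rewrite Csum_mull. apply Ceq; simpl; ring. }
  rewrite HLt, HR, Hw.
  assert (0 <= sum_f_R0 (tn K W a) n) by (apply cond_pos_sum; intros; apply tn_nonneg).
  simpl Im. nra.
Qed.
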